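(* Let $X=\{1,\dots,n\}$, let $a=(1,2,\dots,n)$ be the $n$-cycle, let $S$ be the flip $S(x,y)=(y,x)$ and $\beta(x,y)=(a^{-1}(y),a(x))$. Then $f,g\colon X\times X\to H$ ($H$ a group) is a noncommutative 2-cocycle pair for $(X,S,\beta)$ if and only if $g\equiv 1$ and, for all $x,y,z\in X$, $f(x,y)=f(a(x),a(y))$, $f(x,x)=1$ and $f(x,y)f(x\triangleright y,z)=f(x,z)f(x\triangleright z,y\triangleright z)$, where $x\triangleright y=x$ is the trivial quandle operation (so that $S(x,y)=(y,x\triangleright y)$). In particular, for $n=2$, $f$ is fully determined by $f(1,2)$.
   Context: For a bijection $\sigma\colon X\times X\to X\times X$ write $\sigma(x,y)=(\sigma^1(x,y),\sigma^2(x,y))$; for a biquandle $(X,\sigma)$, $s_\sigma\colon X\to X$ is the bijection with $\{(x,y):\sigma(x,y)=(x,y)\}=\{(x,s_\sigma(x))\}$; write $s=s_S$, $s_\beta$. Here $(X,S,\beta)$ is a virtual pair. A noncommutative 2-cocycle pair for a virtual pair $(X,S,\beta)$ with values in a group $H$ is a pair $f,g\colon X\times X\to H$ such that for all $x,y,z\in X$: (f1) $f(x,y)f(S^2(x,y),z)=f(x,S^1(y,z))f(S^2(x,S^1(y,z)),S^2(y,z))$; (f2) $f(S^1(x,y),S^1(S^2(x,y),z))=f(y,z)$; (f3) $f(x,s(x))=1$; (g1) $g(x,s_\beta(x))=1$; (g2) $g(x,y)g(\beta(x,y))=1$; (g3) $g(x,y)g(\beta^2(x,y),z)=g(x,\beta^1(y,z))g(\beta^2(x,\beta^1(y,z)),\beta^2(y,z))$;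 (g4) $g(y,z)g(\beta^2(x,\beta^1(y,z)),\beta^2(y,z))=g(x,y)g(\beta^1(x,y),\beta^1(\beta^2(x,y),z))$; (g5) $g(y,z)g(x,\beta^1(y,z))=g(\beta^2(x,y),z)g(\beta^1(x,y),\beta^1(\beta^2(x,y),z))$; (m1) $g(y,z)=g(S^1(x,y),\beta^1(S^2(x,y),z))$; (m2) $g(y,z)g(x,\beta^1(y,z))=g(S^2(x,y),z)g(S^1(x,y),\beta^1(S^2(x,y),z))$; (m3) $g(x,\beta^1(y,z))f(\beta^2(x,\beta^1(y,z)),\beta^2(y,z))=f(x,y)g(S^2(x,y),z)$. *)

(* Defs.v *)
From HB Require Import structures.
From mathcomp Require Import all_boot fingroup.
Set Implicit Arguments. Unset Strict Implicit. Unset Printing Implicit Defensive.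
Local Open Scope group_scope.

Section Cocycle.
Variables (X : Type) (H : groupType).
Variables (S beta : X * X -> X * X).

Let S1 x y := (S (x, y)).1.
Let S2 x y := (S (x, y)).2.
Let b1 x y := (beta (x, y)).1.
Let b2 x y := (beta (x, y)).2.

(* s_sigma is the bijection whose graph is the fixed-point set of sigma;
   f(x, s(x)) = 1 for all x is thus written as: f = 1 on fixed points of S. *)
Definition nc_cocycle_pair (f g : X -> X -> H) : Prop :=
  (forall x y z,
        f x y * f (S2 x y) z = f x (S1 y z) * f (S2 x (S1 y z)) (S2 y z))
  /\ (forall x y z, f (S1 x y) (S1 (S2 x y) z) = f y z)
  /\ (forall x y, S (x, y) = (x, y) -> f x y = 1)
  /\ (forall x y, beta (x, y) = (x, y) -> g x y = 1)
  /\ (forall x y, g x y * g (b1 x y) (b2 x y) = 1)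
  /\ (forall x y z,
        g x y * g (b2 x y) z = g x (b1 y z) * g (b2 x (b1 y z)) (b2 y z))
  /\ (forall x y z,
        g y z * g (b2 x (b1 y z)) (b2 y z) = g x y * g (b1 x y) (b1 (b2 x y) z))
  /\ (forall x y z,
        g y z * g x (b1 y z) = g (b2 x y) z * g (b1 x y) (b1 (b2 x y) z))
  /\ (forall x y z, g y z = g (S1 x y) (b1 (S2 x y) z))
  /\ (forall x y z,
        g y z * g x (b1 y z) = g (S2 x y) z * g (S1 x y) (b1 (S2 x y) z))
  /\ (forall x y z,
        g x (b1 y z) * f (b2 x (b1 y z)) (b2 y z) = f x y * g (S2 x y) z).
End Cocycle.

(* X = {0,...,n-1} (0-indexed version of {1..n}); a = the n-cycle i |-> i+1 mod n *)
Definition cyc (n : nat) (i : 'I_n) : 'I_n := ordS i.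
Definition cyc_inv (n : nat) (i : 'I_n) : 'I_n := ord_pred i.

Definition flip (n : nat) (p : 'I_n * 'I_n) : 'I_n * 'I_n := (p.2, p.1).
Definition beta_cyc (n : nat) (p : 'I_n * 'I_n) : 'I_n * 'I_n :=
  (cyc_inv p.2, cyc p.1).

Definition triv_qdl (n : nat) (x y : 'I_n) : 'I_n := x.

(* Main.v *)
From Stdlib Require Import FunctionalExtensionality.
Require Import Defs.
From HB Require Import structures.
From mathcomp Require Import all_boot fingroup.
Local Open Scope group_scope.

Lemma iter_cyc n (y : 'I_n) k : val (iter k (@cyc n) y) = (y + k) %% n.
Proof.
elim: k => [|k IH] /=; first by rewrite addn0 modn_small.
by rewrite /cyc /= IH -addn1 modnDml addn1 addnS.
Qed.

Lemma cyc_reach n (y z : 'I_n) : exists k, z = iter k (@cyc n) y.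
Proof.
exists (z + n - y); apply: val_inj; rewrite iter_cyc.
rewrite subnKC; last by rewrite (leq_trans (ltnW (ltn_ord y))) // leq_addl.
by rewrite modnDr modn_small.
Qed.

Lemma g_const n (H : groupType) (g : 'I_n -> 'I_n -> H) :
  (forall x y, beta_cyc (x, y) = (x, y) -> g x y = 1) ->
  (forall y z : 'I_n, g y z = g y (cyc_inv z)) -> forall x y, g x y = 1.
Proof.
move=> g1 m1 x y.
have inv : forall z, g x (cyc z) = g x z.
  by move=> z; rewrite m1 /cyc_inv /cyc ordSK.
have [k ->] := @cyc_reach n (cyc x) y.
elim: k => [|k IH] /=; last by rewrite inv.
apply: g1; rewrite /beta_cyc /= /cyc_inv /cyc ordSK //.
Qed.

Theorem mainTheorem4 :
  (forall (n : nat) (H : groupType) (f g : 'I_n -> 'I_n -> H),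
    nc_cocycle_pair (@flip n) (@beta_cyc n) f g <->
    ((forall x y, g x y = 1) /\
     (forall x y, f x y = f (cyc x) (cyc y)) /\
     (forall x, f x x = 1) /\
     (forall x y z,
        f x y * f (triv_qdl x y) z =
        f x z * f (triv_qdl x z) (triv_qdl y z)))) /\
  (* n = 2: f is determined by f(1,2) (here f(0,1), 0-indexed) *)
  (forall (H : groupType) (f g f' g' : 'I_2 -> 'I_2 -> H),
    nc_cocycle_pair (@flip 2) (@beta_cyc 2) f g ->
    nc_cocycle_pair (@flip 2) (@beta_cyc 2) f' g' ->
    f ord0 ord_max = f' ord0 ord_max -> f = f').
Proof.
have fwd : forall (n : nat) (H : groupType) (f g : 'I_n -> 'I_n -> H),
    nc_cocycle_pair (@flip n) (@beta_cyc n) f g ->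
    ((forall x y, g x y = 1) /\
     (forall x y, f x y = f (cyc x) (cyc y)) /\
     (forall x, f x x = 1) /\
     (forall x y z,
        f x y * f (triv_qdl x y) z =
        f x z * f (triv_qdl x z) (triv_qdl y z))).
  move=> n H f g [f1 [f2 [f3 [g1 [g2 [g3 [g4 [g5 [m1 [m2 m3]]]]]]]]]].
  have gg : forall x y, g x y = 1.
    apply: g_const => // y z; exact: (m1 y y z).
  split=> //; split.
    move=> x y; have := m3 x y (cyc y).
    by rewrite /= !gg ?ordSK mul1g mulg1 => ->.
  split; first by move=> x; apply: f3.
  by move=> x y z; exact: (f1 x y z).
split.
  move=> n H f g; split; first exact: fwd.
  move=> [gg [fa [fd fc]]].
  rewrite /nc_cocycle_pair /=.
  split; first by move=> x y z; exact: fc.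
  split; first by [].
  split; first by move=> x y [-> _]; rewrite fd.
  do 7 (split; first by move=> *; rewrite ?gg ?mul1g ?mulg1).
  by move=> x y z; rewrite !gg mul1g mulg1 /cyc_inv /= -fa.
move=> H f g f' g' Hf Hf' e.
have [_ [fa [fd _]]] := fwd _ _ _ _ Hf.
have [_ [fa' [fd' _]]] := fwd _ _ _ _ Hf'.
have E : forall x y : 'I_2, x = y \/ (x = ord0 /\ y = ord_max) \/ (x = ord_max /\ y = ord0).
  move=> [[|[|//]] px] [[|[|//]] py]; [left; exact: val_inj | right; left; split; exact: val_inj | right; right; split; exact: val_inj | left; exact: val_inj].
apply: functional_extensionality => x; apply: functional_extensionality => y.
case: (E x y) => [->|[[-> ->]|[-> ->]]]; first by rewrite fd fd'.
  exact: e.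
have c1 : cyc (ord_max : 'I_2) = ord0 by apply: val_inj.
have c0 : cyc (ord0 : 'I_2) = ord_max by apply: val_inj.
by rewrite fa fa' c1 c0; exact: e.
Qed.
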